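(* Let $\gamma > \sqrt{2}$ and let $I$ be a $\gamma$-stable instance of the Euclidean Steiner tree problem with optimal Steiner tree $\mathrm{OPT}$. Then every Steiner point that is a vertex of $\mathrm{OPT}$ has degree in $\mathrm{OPT}$ at most $\frac{-2}{2 - \gamma^2}$.
   Context: An instance of the Euclidean Steiner tree problem consists of a finite set $V \subset \mathbb{R}^d$, a set $T \subseteq V$ of terminals, and the complete graph on $V$ with edge weights $w_{uv} = \|u - v\|$. Points of $V \setminus T$ are Steiner points. A Steiner tree is a tree in this complete graph whose vertex set contains all of $T$; its weight is the sum of its edge weights. For $\gamma > 1$, the instance is $\gamma$-stable if it has a minimum-weight Steiner tree $\mathrm{OPT}$ such that for every $w' : V \times V \to \mathbb{R}_{\ge 0}$ with $w_{uv} \le w'_{uv} \le \gamma w_{uv}$ for all $u,v$, every minimum-weight Steiner tree with respect to $w'$ equals $\mathrm{OPT}$ (the $w'$ need not be Euclidean). *)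

(* Defs.v *)
From HB Require Import structures.
From mathcomp Require Import all_boot all_order all_algebra.
From mathcomp Require Import reals.
Set Implicit Arguments. Unset Strict Implicit. Unset Printing Implicit Defensive.
Import Order.TTheory GRing.Theory Num.Theory.
Local Open Scope ring_scope.

Section Steiner.
Variables (R : realType) (d : nat) (V : finType).

Definition edist (x y : 'rV[R]_d) : R :=
  Num.sqrt (\sum_(i < d) (x 0 i - y 0 i) ^+ 2).

Definition is_edge (e : {set V}) : bool := #|e| == 2%N.

(* Euclidean weight of an edge e = {u,v}: (1/2) * sum_{u,v in e} |u - v|,
   which equals |u - v| for a 2-element set. *)
Definition eucl_w (p : V -> 'rV[R]_d) (e : {set V}) : R :=
  (\sum_(u in e) \sum_(v in e) edist (p u) (p v)) / 2.

Definition adj (E : {set {set V}}) : rel V := fun x y => [set x; y] \in E.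

Definition connected_on (S : {set V}) (E : {set {set V}}) : Prop :=
  forall x y, x \in S -> y \in S -> connect (adj E) x y.

(* acyclic: no edge lies on a cycle, i.e. no edge {x,y} of E whose endpoints
   are still connected in E minus that edge *)
Definition acyclic (E : {set {set V}}) : Prop :=
  forall x y, x != y -> [set x; y] \in E ->
    ~~ connect (adj (E :\ [set x; y])) x y.

Definition is_tree (S : {set V}) (E : {set {set V}}) : Prop :=
  [/\ S != set0,
      (forall e, e \in E -> is_edge e /\ e \subset S),
      connected_on S E & acyclic E].

Definition steiner_tree (T S : {set V}) (E : {set {set V}}) : Prop :=
  is_tree S E /\ T \subset S.

Definition tree_weight (w : {set V} -> R) (E : {set {set V}}) : R :=
  \sum_(e in E) w e.

Definition min_steiner_tree (w : {set V} -> R) (T S : {set V})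
    (E : {set {set V}}) : Prop :=
  steiner_tree T S E /\
  forall S' E', steiner_tree T S' E' -> tree_weight w E <= tree_weight w E'.

Definition gamma_perturbation (p : V -> 'rV[R]_d) (gamma : R)
    (w' : {set V} -> R) : Prop :=
  forall u v, u != v ->
    edist (p u) (p v) <= w' [set u; v] <= gamma * edist (p u) (p v).

Definition gamma_stable_with (p : V -> 'rV[R]_d) (T : {set V}) (gamma : R)
    (S : {set V}) (E : {set {set V}}) : Prop :=
  min_steiner_tree (eucl_w p) T S E /\
  forall w', gamma_perturbation p gamma w' ->
    forall S' E', min_steiner_tree w' T S' E' -> S' = S /\ E' = E.

Definition degree (E : {set {set V}}) (v : V) : nat := #|[set e in E | v \in e]|.

End Steiner.

(* Main.v *)
Require Import Defs.
From HB Require Import structures.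
From mathcomp Require Import all_boot all_order all_algebra.
From mathcomp Require Import reals boolp.
From mathcomp Require Import ring lra.
Import Order.TTheory GRing.Theory Num.Theory.
Local Open Scope ring_scope.

Section Geo.
Variables (R : realType) (d : nat).
Implicit Types x y : 'rV[R]_d.

Lemma edist_ge0 x y : 0 <= edist x y.
Proof. exact: sqrtr_ge0. Qed.

Lemma edist_sq x y : edist x y ^+ 2 = \sum_(i < d) (x 0 i - y 0 i) ^+ 2.
Proof. by rewrite /edist sqr_sqrtr // sumr_ge0 // => i _; exact: sqr_ge0. Qed.

Lemma edistC x y : edist x y = edist y x.
Proof. by rewrite /edist; congr Num.sqrt; apply: eq_bigr => i _; rewrite -sqrrN opprB. Qed.

Lemma edistxx x : edist x x = 0.
Proof. by rewrite /edist big1 ?sqrtr0 // => i _; rewrite subrr expr0n. Qed.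

Lemma edist_eq0 x y : edist x y = 0 -> x = y.
Proof.
move=> h.
have h2 : \sum_(i < d) (x 0 i - y 0 i) ^+ 2 = 0 by rewrite -edist_sq h expr0n.
apply/rowP => i.
have := @psumr_eq0P _ _ _ _ (fun i _ => sqr_ge0 (x 0 i - y 0 i)) h2 i isT.
by move/eqP; rewrite sqrf_eq0 subr_eq0 => /eqP.
Qed.

Lemma edist_gt0 x y : x != y -> 0 < edist x y.
Proof.
move=> hxy; rewrite lt_def edist_ge0 andbT; apply/eqP => /edist_eq0 e.
by rewrite e eqxx in hxy.
Qed.

End Geo.

Section Geo2.
Variables (R : realType) (d : nat).

Lemma lin3 (I : finType) (A : pred I) (F G H : I -> R) (al be de : R) :
  \sum_(i in A) (al * (F i + G i) + be * F i - de * H i) =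
  al * (\sum_(i in A) F i + \sum_(i in A) G i) + be * \sum_(i in A) F i
    - de * \sum_(i in A) H i.
Proof.
by rewrite sumrB big_split /= -!mulr_sumr big_split.
Qed.

Lemma geo_key (V : finType) (q : V -> 'rV[R]_d) (c : 'rV[R]_d) (N : {set V})
  (g : R) :
  0 < g -> 2 < g ^+ 2 -> N != set0 -> (forall u, u \in N -> q u != c) ->
  exists2 m, m \in N &
    \sum_(u in N) edist (q u) (q m) < g * \sum_(u in N) edist c (q u).
Proof.
move=> g0 g2 N0 hq.
pose r u := edist c (q u).
have rpos u : u \in N -> 0 < r u.
  by move=> hu; apply: edist_gt0; rewrite eq_sym hq.
pose a u (t : 'I_d) := q u 0 t - c 0 t.
pose X u m := \sum_(t < d) a u t * a m t.
have hr2 u : r u ^+ 2 = \sum_(t < d) a u t ^+ 2.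
  by rewrite /r edist_sq; apply: eq_bigr => t _; rewrite /a -sqrrN opprB.
have hD2 u m : edist (q u) (q m) ^+ 2 = r u ^+ 2 + r m ^+ 2 - 2 * X u m.
  rewrite edist_sq !hr2 /X mulr_sumr -big_split -sumrB /=.
  by apply: eq_bigr => t _; rewrite /a; ring.
pose D u m := edist (q u) (q m).
have hpair u m : u \in N -> m \in N ->
   D u m / r m <= g / 4 * (r u / r m + r m / r u) + g^-1 * (r u / r m)
                  - g / 2 * (X u m / (r u * r m)).
  move=> hu hm.
  have hX : X u m = (r u ^+ 2 + r m ^+ 2 - D u m ^+ 2) / 2 by rewrite /D hD2; field.
  rewrite hX.
  have ru0 := rpos u hu; have rm0 := rpos m hm.
  move: (D u m) (r u) (r m) ru0 rm0 => x y z y0 z0.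
  rewrite -subr_ge0.
  have -> : g / 4 * (y / z + z / y) + g^-1 * (y / z) -
     g / 2 * ((y ^+ 2 + z ^+ 2 - x ^+ 2) / 2 / (y * z)) - x / z
     = (g * x / 2 - y) ^+ 2 / (g * y * z).
    field; apply/and3P; split; rewrite ?gt_eqF //; lra.
  by apply: divr_ge0; [exact: sqr_ge0 | rewrite !mulr_ge0 // ltW].
pose Q := \sum_(m in N) \sum_(u in N) r u / r m.
pose Y := \sum_(m in N) \sum_(u in N) X u m / (r u * r m).
have hY : 0 <= Y.
  have -> : Y = \sum_(t < d) (\sum_(u in N) a u t / r u) ^+ 2.
    transitivity (\sum_(m in N) \sum_(u in N) \sum_(t < d) (a u t / r u) * (a m t / r m)).
      apply: eq_bigr => m _; apply: eq_bigr => u _; rewrite /X mulr_suml.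
      by apply: eq_bigr => t _; rewrite invfM; ring.
    rewrite exchange_big /=.
    transitivity (\sum_(u in N) \sum_(t < d) \sum_(m in N) (a u t / r u) * (a m t / r m)).
      by apply: eq_bigr => u _; rewrite exchange_big.
    rewrite exchange_big /=; apply: eq_bigr => t _.
    rewrite expr2 mulr_suml; apply: eq_bigr => u _; by rewrite mulr_sumr.
  by apply: sumr_ge0 => t _; exact: sqr_ge0.
have hQ' : \sum_(m in N) \sum_(u in N) r m / r u = Q by rewrite exchange_big.
have hQ : 0 < Q.
  case/set0Pn: N0 => u0 hu0.
  rewrite /Q (bigD1 u0) //= (bigD1 u0) //= divff ?gt_eqF ?rpos //.
  have hnn : forall i j, i \in N -> j \in N -> 0 <= r j / r i.
    by move=> i j hi hj; rewrite divr_ge0 // ltW // rpos.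
  rewrite -addrA ltr_pwDl // addr_ge0 //.
    by apply: sumr_ge0 => i /andP [hi _]; exact: hnn.
  apply: sumr_ge0 => i /andP [hi _]; apply: sumr_ge0 => j hj; exact: hnn.
have hup : \sum_(m in N) \sum_(u in N) D u m / r m
    <= g / 4 * (Q + Q) + g^-1 * Q - g / 2 * Y.
  rewrite -{2}hQ' /Q /Y -lin3.
  apply: ler_sum => m hm; rewrite -lin3; apply: ler_sum => u hu; exact: hpair.
case: (boolP [exists m in N, \sum_(u in N) edist (q u) (q m) < g * \sum_(u in N) edist c (q u)]).
  by case/exists_inP => m hm h; exists m.
move/exists_inPn => H.
have hlow : g * Q <= \sum_(m in N) \sum_(u in N) D u m / r m.
  rewrite /Q mulr_sumr; apply: ler_sum => m hm.
  rewrite -mulr_suml -mulr_suml mulrA ler_wpM2r //.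
    by rewrite invr_ge0 ltW // rpos.
  by move: (H m hm); rewrite -leNgt.
have gi : g^-1 * g = 1 by rewrite mulVf // gt_eqF.
have h1 : g^-1 < g / 2 by nra.
have h2 : 0 < (g / 2 - g^-1) * Q by apply: mulr_gt0 => //; lra.
exfalso; nra.
Qed.

End Geo2.

Section Graph.
Variables (R : realType) (V : finType).

Lemma ex_min (X : finType) (P : X -> Prop) (f : X -> R) :
  (exists x, P x) -> exists x, P x /\ forall y, P y -> f x <= f y.
Proof.
case=> x0 h0.
have hb : `[< P x0 >] by apply/asboolP.
case: (@arg_minP _ _ _ x0 (fun x => `[< P x >]) f hb) => x /asboolP hx hmin.
by exists x; split => // y hy; apply: hmin; apply/asboolP.
Qed.

Lemma sum_setU_le (I : finType) (A B : {set I}) (F : I -> R) :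
  (forall i, 0 <= F i) ->
  \sum_(i in A :|: B) F i <= \sum_(i in A) F i + \sum_(i in B) F i.
Proof.
move=> F0.
rewrite (big_setID A) /= setUK setDUl setDv set0U.
have h := big_setID A (fun i => F i) (A := B).
have h2 : 0 <= \sum_(i in B :&: A) F i by apply: sumr_ge0.
rewrite h /=; lra.
Qed.

Lemma adj_sym (E : {set {set V}}) : symmetric (adj E).
Proof. by move=> x y; rewrite /adj setUC. Qed.

Lemma set2_eq (a z x y : V) : [set a; z] = [set x; y] ->
  (a = x /\ z = y) \/ (a = y /\ z = x).
Proof.
move=> H.
have ha : a \in [set x; y] by rewrite -H set21.
have hz : z \in [set x; y] by rewrite -H set22.
case/set2P: ha => ea; case/set2P: hz => ez; subst; auto.
- have : y \in [set x; x] by rewrite H set22.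
  by rewrite setUid inE => /eqP ->; auto.
- have : x \in [set y; y] by rewrite H set21.
  by rewrite setUid inE => /eqP ->; auto.
Qed.

Lemma reroute (E : {set {set V}}) x y a b :
  connect (adj (E :\ [set x; y])) x y -> connect (adj E) a b ->
  connect (adj (E :\ [set x; y])) a b.
Proof.
move=> hxy /connectP [q pth ->].
elim: q a pth => [|z q IH] a /=; first by move=> _; exact: connect0.
case/andP => hadj hp.
apply: connect_trans (IH z hp).
case: (boolP ([set a; z] == [set x; y])) => [/eqP e | ne].
  case: (@set2_eq _ _ _ _ e) => [[-> ->] | [-> ->]] //.
  by rewrite (sym_connect_sym (adj_sym _)).
by apply: connect1; rewrite /adj in_setD1 ne.
Qed.

Definition good (T : {set V}) (x : {set V} * {set {set V}}) : Prop :=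
  [/\ x.1 != set0, (forall e, e \in x.2 -> is_edge e /\ e \subset x.1),
      connected_on x.1 x.2 & T \subset x.1].

Lemma min_tree_exists (w : {set V} -> R) T S' E' :
  good T (S', E') -> (forall x y, x != y -> 0 < w [set x; y]) ->
  exists S0 E0, min_steiner_tree w T S0 E0 /\
    forall S1 E1, good T (S1, E1) -> tree_weight w E0 <= tree_weight w E1.
Proof.
move=> hg wpos.
have [[S0 E0] [[h1 h2 h3 h4] hmin]] :=
  @ex_min _ (good T) (fun x => tree_weight w x.2) (ex_intro (good T) _ hg).
exists S0, E0; split; last by move=> S1 E1 /hmin.
split.
  split => //; split => //=.
  move=> x y hxy he; apply/negP => hc.
  have hg1 : good T (S0, E0 :\ [set x; y]).
    split => //=.
    - by move=> e; rewrite in_setD1 => /andP [_ /h2].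
    - by move=> a b ha hb; apply: reroute hc (h3 a b ha hb).
  have := hmin _ hg1; rewrite /tree_weight /= (bigD1 [set x; y]) //=.
  have -> : \sum_(i in E0 | i != [set x; y]) w i =
            \sum_(i in E0 :\ [set x; y]) w i.
    by apply: eq_bigl => e; rewrite in_setD1 andbC.
  have := wpos x y hxy; lra.
by move=> S1 E1 [[hne hed hc hac] hT]; exact: (hmin (S1, E1)).

Qed.

End Graph.


Lemma eucl_w2 (R : realType) (d : nat) (V : finType) (p : V -> 'rV[R]_d) u v :
  u != v -> eucl_w p [set u; v] = edist (p u) (p v).
Proof.
move=> huv.
have hn : u \notin [set v] by rewrite inE.
rewrite /eucl_w big_setU1 //= big_set1 !big_setU1 //= !big_set1.
rewrite !edistxx [edist (p v) _]edistC.
lra.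
Qed.

Lemma eucl_w_ge0 (R : realType) (d : nat) (V : finType) (p : V -> 'rV[R]_d) e :
  0 <= eucl_w p e.
Proof.
rewrite /eucl_w divr_ge0 // sumr_ge0 // => u _; apply: sumr_ge0 => v _.
exact: edist_ge0.
Qed.

Theorem mainTheorem12 (R : realType) (d : nat) (V : finType)
    (p : V -> 'rV[R]_d) (T : {set V}) (gamma : R)
    (S : {set V}) (E : {set {set V}}) :
  injective p ->
  1 < gamma ->
  Num.sqrt 2 < gamma ->
  gamma_stable_with p T gamma S E ->
  forall v, v \in S -> v \notin T ->
    (degree E v)%:R <= -2 / (2 - gamma ^+ 2).
Proof.
move=> pinj g1 gs2 [[[[_ hE hconn _] hTS] _] Hst] s sS sT.
have g2 : 2 < gamma ^+ 2.
  have h0 := sqrtr_ge0 (2 : R).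
  have h2 : Num.sqrt (2 : R) ^+ 2 = 2 by rewrite sqr_sqrtr.
  nra.
pose N := [set u | [set s; u] \in E].
have hNs u : u \in N -> u != s.
  rewrite inE => hu; apply/eqP => eus; move: hu; rewrite eus setUid => /hE [].
  by rewrite /is_edge cards1.
have hNS u : u \in N -> u \in S.
  rewrite inE => /hE [_ /subsetP]; apply; exact: set22.
have hinj : injective (fun u => [set s; u]).
  move=> u u' /= /set2_eq [[_ ->] // | [eu' eu]].
  by rewrite eu eu'.
have hdeg : [set e in E | s \in e] = [set [set s; u] | u in N].
  apply/setP => e; rewrite inE; apply/andP/imsetP.
    case=> he hs; have [/cards2P [x [y [hxy ee]]] _] := hE e he.
    move: hs; rewrite ee => /set2P [ex | ey].
      by subst x; exists y => //; rewrite inE -ee.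
    by subst y; exists x; [rewrite inE setUC -ee | rewrite setUC].
  by case=> u; rewrite inE => hu ->; split => //; exact: set21.
have -> : degree E s = #|N| by rewrite /degree hdeg card_imset.
have hrhs : 0 <= -2 / (2 - gamma ^+ 2).
  have -> : -2 / (2 - gamma ^+ 2) = 2 / (gamma ^+ 2 - 2).
    by rewrite -[gamma ^+ 2 - 2]opprB invrN mulrN mulNr.
  rewrite divr_ge0 //; lra.
case: (boolP (N == set0)) => [/eqP -> | N0]; first by rewrite cards0.
exfalso.
have g0 : 0 < gamma by lra.
have hq : forall u, u \in N -> p u != p s.
  by move=> u hu; apply/eqP => /pinj e; move: (hNs u hu); rewrite e eqxx.
have [m hmN hm] := @geo_key R d V p (p s) N gamma g0 g2 N0 hq.
have hms := hNs m hmN.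
pose w' := fun e : {set V} =>
  (if (e \in E) && (s \in e) then gamma else 1) * eucl_w p e.
have hw0 e : 0 <= w' e.
  rewrite /w' mulr_ge0 ?eucl_w_ge0 //; case: ifP => _; lra.
have hpert : gamma_perturbation p gamma w'.
  move=> u u' hu; rewrite /w' eucl_w2 //.
  have := @edist_ge0 R d (p u) (p u').
  case: ifP => _ h; apply/andP; split; nra.
have hwpos x y : x != y -> 0 < w' [set x; y].
  move=> hxy; have /andP [h _] := hpert x y hxy.
  apply: lt_le_trans h; apply: (@edist_gt0 R d).
  by apply/eqP => /pinj e; rewrite e eqxx in hxy.
pose E' := [set e in E | s \notin e] :|: [set [set u; m] | u in N :\ m].
pose S' := S :\ s.
have hgood : @good V T (S', E').
  split => /=.
  - by apply/set0Pn; exists m; rewrite in_setD1 hms hNS.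
  - move=> e; rewrite in_setU => /orP [].
      rewrite inE => /andP [he hs]; have [h1 h2] := hE e he.
      by split => //; rewrite subsetD1 h2 hs.
    case/imsetP => u; rewrite in_setD1 => /andP [hum huN] ->.
    split; first by rewrite /is_edge cards2 hum.
    apply/subsetP => z; rewrite in_setD1 !inE => /orP [] /eqP ->.
      by rewrite hNs // hNS.
    by rewrite hms hNS.
  - have hz : forall z, z \in S -> z != s -> connect (adj E') z m.
      move=> z hzS hzs.
      have /connectP [pth hp hl] := hconn z s hzS sS.
      elim: pth z hp hl hzS hzs => [|z1 pth IH] z /=.
        by move=> _ hl _; rewrite hl eqxx.
      case/andP => hadj hp hl hzS hzs.
      case: (z1 =P s) => [ez1 | nz1].
        have hzN : z \in N by rewrite inE setUC -ez1.
        case: (z =P m) => [-> | nzm]; first exact: connect0.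
        apply: connect1; rewrite /adj in_setU; apply/orP; right.
        apply/imsetP; exists z => //; rewrite in_setD1 hzN andbT; exact/eqP.
      have hz1S : z1 \in S.
        by have [_ /subsetP] := hE _ hadj; apply; exact: set22.
      apply: connect_trans (IH z1 hp hl hz1S (introN eqP nz1)).
      apply: connect1; rewrite /adj in_setU; apply/orP; left.
      rewrite inE; apply/andP; split; first exact: hadj.
      rewrite !inE negb_or eq_sym hzs /=; apply/eqP => e.
      by apply: nz1.
    move=> x y; rewrite !in_setD1 => /andP [hxs hxS] /andP [hys hyS].
    apply: connect_trans (hz x hxS hxs) _.
    rewrite (sym_connect_sym (@adj_sym V _)); exact: hz.
  - apply/subsetP => t ht; rewrite in_setD1 (subsetP hTS t ht) andbT.
    by apply/eqP => ets; rewrite -ets ht in sT.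
have [S0 [E0 [hmin0 hle]]] := @min_tree_exists R V w' T S' E' hgood hwpos.
have [_ eE] := Hst w' hpert S0 E0 hmin0.
have := hle S' E' hgood; rewrite eE.
have hWE : tree_weight w' E = \sum_(e in E | s \notin e) w' e
                              + gamma * \sum_(u in N) edist (p s) (p u).
  rewrite /tree_weight (bigID (fun e : {set V} => s \in e) (fun e => e \in E)) /= addrC; congr (_ + _).
  rewrite mulr_sumr.
  transitivity (\sum_(e in [set e in E | s \in e]) w' e).
    by apply: eq_bigl => e; rewrite inE.
  rewrite hdeg big_imset /=; last by move=> u u' _ _; exact: hinj.
  apply: eq_bigr => u hu.
  have hu' : [set s; u] \in E by rewrite inE in hu.
  by rewrite /w' hu' set21 /= eucl_w2 // eq_sym hNs.
have hWE' : tree_weight w' E' <= \sum_(e in E | s \notin e) w' e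
                                 + \sum_(u in N) edist (p u) (p m).
  apply: le_trans (@sum_setU_le R _ _ _ _ hw0) _.
  apply: lerD.
    have -> : \sum_(e in [set e in E | s \notin e]) w' e = \sum_(e in E | s \notin e) w' e.
      by apply: eq_bigl => e; rewrite inE.
    exact: lexx.
  rewrite big_imset /=; last first.
    move=> u u' hu hu' /set2_eq [[-> _] // | [eu _]].
    by move: hu; rewrite eu in_setD1 eqxx.
  rewrite [X in _ <= X](bigD1 m) //= edistxx add0r le_eqVlt; apply/orP; left.
  apply/eqP; apply: eq_big => [u | u hu]; first by rewrite in_setD1 andbC.
  move: hu; rewrite in_setD1 => /andP [hum huN].
  have hsn : s \notin [set u; m] by rewrite !inE negb_or !(eq_sym s) hNs // hms.
  by rewrite /w' (negbTE hsn) andbF mul1r eucl_w2.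
lra.
Qed.
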